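(* For any nonempty computably enumerable set $B\subseteq\omega$ the following are equivalent: (1) $B$ is disjoint from some infinite computable set; (2) there is a computable permutation $\pi$ of $\omega$ and a self-constructing set $A$ such that $A$ and $B$ are images of one another under $\pi$ (i.e. $\pi(A)=B$, equivalently $A=\pi^{-1}(B)$).
   Context: $\omega$ denotes the set of natural numbers $\{0,1,2,\dots\}$. $\langle \psi_e : e\in\omega\rangle$ is a standard (acceptable, in the sense of Rogers) computable numbering of all partial computable functions from $\omega$ to $\omega$, and $W_e$ denotes the domain of $\psi_e$, so $\langle W_e:e\in\omega\rangle$ is a uniform listing of all computably enumerable subsets of $\omega$. A nonempty computably enumerable set $A\subseteq\omega$ is called self-constructing if $W_e=A$ for every $e\in A$. *)

(* Defs.v *)
(* A concrete model of computation: mu-recursive function codes,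
   a big-step evaluation relation, an injective Goedel encoding of codes into
   nat, and from it the acceptable numbering psi_e of unary partial computable
   functions (indices that encode no code denote the empty function). *)
From Stdlib Require Import Arith List.
Import ListNotations.

Inductive code : Type :=
| CZero : code
| CSucc : code
| CProj : nat -> code
| CComp : code -> list code -> code
| CPrec : code -> code -> code      (* primitive recursion on the first argument *)
| CMu   : code -> code.             (* minimisation on the first argument *)

Inductive eval : code -> list nat -> nat -> Prop :=
| ev_zero : forall v, eval CZero v 0
| ev_succ : forall x v, eval CSucc (x :: v) (S x)
| ev_proj : forall i v, i < length v -> eval (CProj i) v (nth i v 0)
| ev_comp : forall f gs v ws y,
    Forall2 (fun g w => eval g v w) gs ws -> eval f ws y -> eval (CComp f gs) v y
| ev_prec0 : forall f g v y, eval f v y -> eval (CPrec f g) (0 :: v) y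
| ev_precS : forall f g n v r y,
    eval (CPrec f g) (n :: v) r -> eval g (n :: r :: v) y ->
    eval (CPrec f g) (S n :: v) y
| ev_mu : forall f v n,
    eval f (n :: v) 0 ->
    (forall m, m < n -> exists k, eval f (m :: v) (S k)) ->
    eval (CMu f) v n.

(* Bijective pairing nat*nat -> nat : <a,b> = 2^a (2b+1) - 1. *)
Definition pair (a b : nat) : nat := 2 ^ a * (2 * b + 1) - 1.

Fixpoint encode (c : code) : nat :=
  match c with
  | CZero => pair 0 0
  | CSucc => pair 1 0
  | CProj i => pair 2 i
  | CComp f gs =>
      pair 3 (pair (encode f)
        ((fix encl (l : list code) : nat :=
            match l with
            | [] => 0
            | g :: l' => S (pair (encode g) (encl l'))
            end) gs))
  | CPrec f g => pair 4 (pair (encode f) (encode g))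
  | CMu f => pair 5 (encode f)
  end.

(* psi e x = y : the e-th unary partial computable function converges on x with value y. *)
Definition psi (e x y : nat) : Prop := exists c, encode c = e /\ eval c [x] y.

Definition W (e x : nat) : Prop := exists y, psi e x y.

Definition ce_set (A : nat -> Prop) : Prop := exists e, forall x, A x <-> W e x.

Definition computable_fun (f : nat -> nat) : Prop :=
  exists e, forall x, psi e x (f x).

Definition computable_set (R : nat -> Prop) : Prop :=
  exists chi : nat -> nat, computable_fun chi /\
    forall x, (R x <-> chi x = 1) /\ (~ R x <-> chi x = 0).

Definition infinite_set (R : nat -> Prop) : Prop :=
  forall n, exists m, n <= m /\ R m.

Definition bijective (f : nat -> nat) : Prop :=
  (forall x y, f x = f y -> x = y) /\ (forall y, exists x, f x = y).

Definition computable_perm (pi : nat -> nat) : Prop :=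
  bijective pi /\ computable_fun pi.

Definition self_constructing (A : nat -> Prop) : Prop :=
  ce_set A /\ (exists x, A x) /\ (forall e, A e -> forall x, W e x <-> A x).

(* Main.v *)
Require Import Defs.
From Stdlib Require Import Arith List Lia Classical IndefiniteDescription FinFun.
Import ListNotations.


Definition eval_ind2 (P : code -> list nat -> nat -> Prop)
  (Hz : forall v, P CZero v 0)
  (Hs : forall x v, P CSucc (x :: v) (S x))
  (Hp : forall i v, i < length v -> P (CProj i) v (nth i v 0))
  (Hc : forall f gs v ws y,
    Forall2 (fun g w => eval g v w /\ P g v w) gs ws -> eval f ws y -> P f ws y -> P (CComp f gs) v y)
  (Hp0 : forall f g v y, eval f v y -> P f v y -> P (CPrec f g) (0 :: v) y)
  (HpS : forall f g n v r y,
    eval (CPrec f g) (n :: v) r -> P (CPrec f g) (n :: v) r ->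
    eval g (n :: r :: v) y -> P g (n :: r :: v) y -> P (CPrec f g) (S n :: v) y)
  (Hm : forall f v n, eval f (n :: v) 0 -> P f (n :: v) 0 ->
    (forall m, m < n -> exists k, eval f (m :: v) (S k) /\ P f (m :: v) (S k)) ->
    P (CMu f) v n) :
  forall c v y, eval c v y -> P c v y :=
  fix F c v y (H : eval c v y) {struct H} : P c v y :=
  match H in eval c v y return P c v y with
  | ev_zero v => Hz v
  | ev_succ x v => Hs x v
  | ev_proj i v h => Hp i v h
  | ev_comp f gs v ws y HF Hf =>
      Hc f gs v ws y
        ((fix G gs ws (HF : Forall2 (fun g w => eval g v w) gs ws) {struct HF}
            : Forall2 (fun g w => eval g v w /\ P g v w) gs ws :=
          match HF in Forall2 _ gs ws return Forall2 (fun g w => eval g v w /\ P g v w) gs ws with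
          | @Forall2_nil _ _ _ => @Forall2_nil _ _ _
          | @Forall2_cons _ _ _ g w gs' ws' h t => @Forall2_cons _ _ _ g w gs' ws' (conj h (F g v w h)) (G gs' ws' t)
          end) gs ws HF) Hf (F f ws y Hf)
  | ev_prec0 f g v y h => Hp0 f g v y h (F _ _ _ h)
  | ev_precS f g n v r y h1 h2 => HpS f g n v r y h1 (F _ _ _ h1) h2 (F _ _ _ h2)
  | ev_mu f v n h0 hlt => Hm f v n h0 (F _ _ _ h0)
      (fun m hm => match hlt m hm with ex_intro _ k hk => ex_intro _ k (conj hk (F _ _ _ hk)) end)
  end.

Lemma eval_det : forall c v y, eval c v y -> forall y', eval c v y' -> y = y'.
Proof.
  apply (eval_ind2 (fun c v y => forall y', eval c v y' -> y = y')).
  - intros v y' H; inversion H; auto.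
  - intros x v y' H; inversion H; auto.
  - intros i v _ y' H; inversion H; auto.
  - intros f gs v ws y HF Hf IHf y' H. inversion H; subst.
    assert (ws = ws0).
    { match goal with Hx : Forall2 _ gs ws0 |- _ => rename Hx into H3 end. clear -HF H3. revert ws0 H3. induction HF; intros ws0 H3; inversion H3; subst; auto.
      destruct H as [_ H]. f_equal; auto. }
    subst; auto.
  - intros f g v y _ IH y' H; inversion H; subst; auto.
  - intros f g n v r y _ IH1 _ IH2 y' H; inversion H; subst.
    apply IH1 in H5; subst; auto.
  - intros f v n _ IH0 Hlt y' H; inversion H as [| | | | | |f0 v0 n0 H2 H3]; subst.
    destruct (lt_eq_lt_dec n y') as [[Hl|He]|Hl]; auto.
    + destruct (H3 n Hl) as [k Hk]. apply IH0 in Hk. discriminate.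
    + destruct (Hlt y' Hl) as [k [Hk IH]]. apply IH in H2. discriminate.
Qed.

Lemma pair_S : forall a b, S (pair a b) = 2 ^ a * (2 * b + 1).
Proof.
  intros a b. unfold pair. assert (1 <= 2 ^ a) by (induction a; simpl; lia).
  nia.
Qed.

Lemma pow2_odd_inj : forall a a' b b', 2 ^ a * (2 * b + 1) = 2 ^ a' * (2 * b' + 1) -> a = a' /\ b = b'.
Proof.
  induction a; intros a' b b' H; destruct a'; simpl in H.
  - lia.
  - exfalso. rewrite Nat.add_0_r in H. lia.
  - exfalso. rewrite Nat.add_0_r in H. lia.
  - rewrite !Nat.add_0_r in H. destruct (IHa a' b b'); lia.
Qed.

Lemma pair_inj : forall a b a' b', pair a b = pair a' b' -> a = a' /\ b = b'.
Proof.
  intros. apply pow2_odd_inj. rewrite <- !pair_S. lia.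
Qed.

Lemma pair_ge : forall a b, b <= pair a b /\ a <= pair a b.
Proof.
  intros a b. assert (H := pair_S a b).
  assert (a < 2 ^ a) by (apply Nat.pow_gt_lin_r; lia).
  assert (1 <= 2 ^ a) by lia. split; nia.
Qed.

Definition code_ind2 (P : code -> Prop)
  (Hz : P CZero) (Hs : P CSucc) (Hp : forall i, P (CProj i))
  (Hc : forall f gs, P f -> Forall P gs -> P (CComp f gs))
  (Hr : forall f g, P f -> P g -> P (CPrec f g))
  (Hm : forall f, P f -> P (CMu f)) : forall c, P c :=
  fix F c : P c :=
  match c with
  | CZero => Hz | CSucc => Hs | CProj i => Hp i
  | CComp f gs => Hc f gs (F f)
      ((fix G l : Forall P l := match l with [] => Forall_nil _ | g :: l' => @Forall_cons _ _ g l' (F g) (G l') end) gs)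
  | CPrec f g => Hr f g (F f) (F g)
  | CMu f => Hm f (F f)
  end.

Fixpoint encl (l : list code) : nat :=
  match l with [] => 0 | g :: l' => S (pair (encode g) (encl l')) end.

Lemma encode_comp : forall f gs, encode (CComp f gs) = pair 3 (pair (encode f) (encl gs)).
Proof. reflexivity. Qed.

Lemma encode_inj : forall c c', encode c = encode c' -> c = c'.
Proof.
  apply (code_ind2 (fun c => forall c', encode c = encode c' -> c = c'));
  [ | | intros i | intros f gs IHf IHgs | intros f g IHf IHg | intros f IHf ];
  intros c' H; destruct c' as [ | | j | f' gs' | f' g' | f'];
  try rewrite encode_comp in H; try rewrite encode_comp in H;
  simpl in H; apply pair_inj in H; destruct H as [H1 H2]; try discriminate; auto.
  - apply pair_inj in H2. destruct H2 as [H2 H3]. apply IHf in H2. subst. f_equal.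
    revert gs' H3. induction IHgs; intros gs' H3; destruct gs'; simpl in H3; try discriminate; auto.
    injection H3 as H3. apply pair_inj in H3. destruct H3. f_equal; auto.
  - apply pair_inj in H2. destruct H2. f_equal; auto.
  - f_equal; auto.
Qed.

Lemma ev_eq : forall c v y y', eval c v y' -> y' = y -> eval c v y.
Proof. intros; subst; auto. Qed.

Create HintDb evdb.

Ltac ev_free :=
  lazymatch goal with
  | |- eval (CComp _ _) _ _ => eapply ev_comp; [ evl | ev_free ]
  | |- eval (CProj _) _ _ => apply ev_proj; simpl; lia
  | |- eval CSucc _ _ => apply ev_succ
  | |- eval CZero _ _ => apply ev_zero
  | |- eval _ _ _ => solve [eauto with evdb]
  end
with evl :=
  lazymatch goal with
  | |- Forall2 _ [] _ => apply Forall2_nil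
  | |- Forall2 _ (_ :: _) _ => apply Forall2_cons; [ ev_free | evl ]
  end.

Ltac ev := eapply ev_eq; [ ev_free | cbn [nth] ].

Fixpoint kc (k : nat) : code := match k with 0 => CZero | S k => CComp CSucc [kc k] end.
Lemma kc_ok : forall k v, eval (kc k) v k.
Proof. induction k; intros v; simpl. constructor. ev. reflexivity. Qed.
#[export] Hint Resolve kc_ok : evdb.

Lemma prec0 : forall f g f0 gs h, eval f [] f0 -> (forall n r, eval g [n; r] (gs n r)) ->
  h 0 = f0 -> (forall n, h (S n) = gs n (h n)) -> forall x, eval (CPrec f g) [x] (h x).
Proof.
  intros f g f0 gs h Hf Hg H0 HS x. induction x.
  - rewrite H0. constructor; auto.
  - rewrite HS. eapply ev_precS; eauto.
Qed.

Lemma prec1 : forall f g f0 gs h, (forall x, eval f [x] (f0 x)) -> (forall n r x, eval g [n; r; x] (gs n r x)) ->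
  (forall x, h 0 x = f0 x) -> (forall n x, h (S n) x = gs n (h n x) x) -> forall n x, eval (CPrec f g) [n; x] (h n x).
Proof.
  intros f g f0 gs h Hf Hg H0 HS n x. induction n.
  - rewrite H0. constructor; auto.
  - rewrite HS. eapply ev_precS; eauto.
Qed.

Lemma prec2 : forall f g f0 gs h, (forall x y, eval f [x; y] (f0 x y)) -> (forall n r x y, eval g [n; r; x; y] (gs n r x y)) ->
  (forall x y, h 0 x y = f0 x y) -> (forall n x y, h (S n) x y = gs n (h n x y) x y) ->
  forall n x y, eval (CPrec f g) [n; x; y] (h n x y).
Proof.
  intros f g f0 gs h Hf Hg H0 HS n x y. induction n.
  - rewrite H0. constructor; auto.
  - rewrite HS. eapply ev_precS; eauto.
Qed.

Lemma mu_ok : forall F f k n, (forall y k, eval F [y; k] (f y k)) -> f n k = 0 ->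
  (forall m, m < n -> f m k <> 0) -> eval (CMu F) [k] n.
Proof.
  intros F f k n HF H0 Hlt. constructor.
  - rewrite <- H0. auto.
  - intros m Hm. specialize (Hlt m Hm). destruct (f m k) eqn:E; [congruence|].
    exists n0. rewrite <- E. auto.
Qed.

Definition one := CComp CSucc [CZero].

Definition cAdd := CPrec (CProj 0) (CComp CSucc [CProj 1]).
Lemma cAdd_ok : forall x y, eval cAdd [x; y] (x + y).
Proof. apply prec1 with (f0 := fun x => x) (gs := fun n r x => S r); intros; try ev; auto. Qed.
#[export] Hint Resolve cAdd_ok : evdb.

Definition cPred := CPrec CZero (CProj 0).
Lemma cPred_ok : forall x, eval cPred [x] (pred x).
Proof. apply prec0 with (f0 := 0) (gs := fun n r => n); intros; try ev; auto. Qed.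
#[export] Hint Resolve cPred_ok : evdb.

Definition cSubR := CPrec (CProj 0) (CComp cPred [CProj 1]).
Lemma cSubR_ok : forall y x, eval cSubR [y; x] (x - y).
Proof. apply prec1 with (f0 := fun x => x) (gs := fun n r x => pred r); intros; try ev; auto; lia. Qed.
#[export] Hint Resolve cSubR_ok : evdb.

Definition cSub := CComp cSubR [CProj 1; CProj 0].
Lemma cSub_ok : forall x y, eval cSub [x; y] (x - y).
Proof. intros. lazymatch goal with |- eval ?c _ _ => unfold c end. ev. reflexivity. Qed.
#[export] Hint Resolve cSub_ok : evdb.

Definition cMul := CPrec CZero (CComp cAdd [CProj 1; CProj 2]).
Lemma cMul_ok : forall x y, eval cMul [x; y] (x * y).
Proof. apply prec1 with (f0 := fun x => 0) (gs := fun n r x => r + x); intros; try ev; auto; try lia. Qed.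
#[export] Hint Resolve cMul_ok : evdb.

Definition cPow2 := CPrec one (CComp cAdd [CProj 1; CProj 1]).
Lemma cPow2_ok : forall x, eval cPow2 [x] (2 ^ x).
Proof. apply prec0 with (f0 := 1) (gs := fun n r => r + r); intros; try ev; simpl; auto; try lia.
  unfold one; ev; reflexivity. Qed.
#[export] Hint Resolve cPow2_ok : evdb.

Definition cPair := CComp cSub [CComp cMul [CComp cPow2 [CProj 0]; CComp CSucc [CComp cAdd [CProj 1; CProj 1]]]; kc 1].
Lemma cPair_ok : forall a b, eval cPair [a; b] (pair a b).
Proof. intros. lazymatch goal with |- eval ?c _ _ => unfold c end. ev. unfold pair. f_equal. f_equal. lia. Qed.
#[export] Hint Resolve cPair_ok : evdb.

Definition beq (x y : nat) : nat := if Nat.eqb x y then 1 else 0.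
Definition cEq := CComp cSub [kc 1; CComp cAdd [CComp cSub [CProj 0; CProj 1]; CComp cSub [CProj 1; CProj 0]]].
Lemma cEq_ok : forall x y, eval cEq [x; y] (beq x y).
Proof. intros. lazymatch goal with |- eval ?c _ _ => unfold c end. ev. unfold beq. destruct (Nat.eqb_spec x y); lia. Qed.
#[export] Hint Resolve cEq_ok : evdb.

Definition cIf := CComp cAdd [CComp cMul [CProj 0; CProj 1]; CComp cMul [CComp cSub [kc 1; CProj 0]; CProj 2]].
Lemma cIf_ok : forall b u w, eval cIf [b; u; w] (b * u + (1 - b) * w).
Proof. intros. lazymatch goal with |- eval ?c _ _ => unfold c end. ev. reflexivity. Qed.
#[export] Hint Resolve cIf_ok : evdb.

Lemma code_of_fun : forall f, computable_fun f -> exists c, forall x, eval c [x] (f x).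
Proof.
  intros f [e He]. destruct (He 0) as [c0 [E0 _]]. exists c0. intros x.
  destruct (He x) as [c [E H]]. rewrite <- E0 in E. apply encode_inj in E. subst; auto.
Qed.

Lemma W_code : forall c x, W (encode c) x <-> exists y, eval c [x] y.
Proof.
  intros c x; split.
  - intros [y [c' [E H]]]. apply encode_inj in E; subst. eauto.
  - intros [y H]. exists y, c; auto.
Qed.

Lemma code_of_ce : forall B, ce_set B -> (exists x, B x) -> exists c, forall x, B x <-> exists y, eval c [x] y.
Proof.
  intros B [e He] [x0 Hx0]. apply He in Hx0. destruct Hx0 as [y0 [c0 [E0 _]]]. subst e.
  exists c0. intros x. rewrite He. apply W_code.
Qed.

Lemma fun_choice : forall (Q : nat -> nat -> Prop), (forall k, exists n, Q k n) -> exists g, forall k, Q k (g k).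
Proof.
  intros Q H. exists (fun k => proj1_sig (constructive_indefinite_description _ (H k))).
  intros k. exact (proj2_sig (constructive_indefinite_description _ (H k))).
Qed.

Lemma least_ex : forall P : nat -> Prop, (forall n, P n \/ ~ P n) -> (exists n, P n) ->
  exists n, P n /\ forall m, m < n -> ~ P m.
Proof.
  intros P Hd [n Hn]. revert Hn. induction n as [n IH] using lt_wf_ind. intros Hn.
  destruct (classic (exists m, m < n /\ P m)) as [[m [Hm Pm]]|Hno].
  - exact (IH m Hm Pm).
  - exists n. split; auto. intros m Hm Pm. apply Hno; eauto.
Qed.

Lemma mu_total : forall F f, (forall y k, eval F [y; k] (f y k)) -> (forall k, exists n, f n k = 0) ->
  exists g, (forall k, eval (CMu F) [k] (g k)) /\ (forall k, f (g k) k = 0).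
Proof.
  intros F f HF Hex.
  assert (forall k, exists n, f n k = 0 /\ forall m, m < n -> f m k <> 0).
  { intros k. apply least_ex. intros n; destruct (Nat.eq_dec (f n k) 0); auto. auto. }
  apply fun_choice in H. destruct H as [g Hg]. exists g. split.
  - intros k. destruct (Hg k). eapply mu_ok; eauto.
  - intros k. apply Hg.
Qed.

Lemma nocode : forall c m, encode c <> 64 * m + 63.
Proof.
  assert (forall t b m, t <= 5 -> pair t b <> 64 * m + 63).
  { intros t b m Ht H. assert (S (pair t b) = 64 * (S m)) by lia. rewrite pair_S in H0.
    destruct t as [|[|[|[|[|[|]]]]]]; simpl in H0; lia. }
  intros c m; destruct c; simpl; apply H; lia.
Qed.

Lemma W_nocode : forall m x, ~ W (64 * m + 63) x.
Proof. intros m x [y [c [E _]]]. eapply nocode; eauto. Qed.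

Fixpoint m64 (z : nat) : nat := match z with 0 => 0 | S z => if Nat.eqb (m64 z) 63 then 0 else S (m64 z) end.
Definition cM64 := CPrec CZero (CComp cIf [CComp cEq [CProj 1; kc 63]; CZero; CComp CSucc [CProj 1]]).
Lemma cM64_ok : forall z, eval cM64 [z] (m64 z).
Proof.
  apply prec0 with (f0 := 0) (gs := fun n r => beq r 63 * 0 + (1 - beq r 63) * S r); intros; try constructor; try ev; auto.
  simpl. unfold beq. destruct (Nat.eqb (m64 n) 63); lia.
Qed.
#[export] Hint Resolve cM64_ok : evdb.

Lemma m64_spec : forall z, exists q, z = 64 * q + m64 z /\ m64 z < 64.
Proof.
  induction z; simpl. exists 0; lia.
  destruct IHz as [q [H1 H2]]. destruct (Nat.eqb_spec (m64 z) 63).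
  - exists (S q); lia.
  - exists q; lia.
Qed.

Lemma m64_63 : forall m, m64 (64 * m + 63) = 63.
Proof. intros m. destruct (m64_spec (64 * m + 63)) as [q [H1 H2]]. lia. Qed.

Lemma pigeon : forall (f : nat -> nat), (forall x y, f x = f y -> x = y) -> forall n, exists i, i <= n /\ n <= f i.
Proof.
  intros f Hf n. apply NNPP. intros Hno.
  assert (NoDup (map f (seq 0 (S n)))).
  { apply FinFun.Injective_map_NoDup. intros a b; apply Hf. apply seq_NoDup. }
  assert (incl (map f (seq 0 (S n))) (seq 0 n)).
  { intros a Ha. apply in_map_iff in Ha. destruct Ha as [i [Hi Hi']]. apply in_seq in Hi'.
    apply in_seq. split; [lia|]. destruct (le_lt_dec n (f i)); [|lia]. exfalso; apply Hno. exists i; split; [lia|]; congruence. }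
  apply NoDup_incl_length in H0; auto. rewrite length_map, !length_seq in H0. lia.
Qed.

Lemma dir21 : forall B : nat -> Prop,
  (exists pi : nat -> nat, computable_perm pi /\
        exists A : nat -> Prop, self_constructing A /\ (forall x, A x <-> B (pi x))) ->
  exists R : nat -> Prop, computable_set R /\ infinite_set R /\ (forall x, R x -> ~ B x).
Proof.
  intros B [pi [[[Hinj Hsurj] Hpc] [A [[_ [_ HA]] HAB]]]].
  apply code_of_fun in Hpc. destruct Hpc as [cp Hcp].
  assert (HD : forall x y, eval (CComp cAdd [CComp cSub [CComp cp [CProj 0]; CProj 1]; CComp cSub [CProj 1; CComp cp [CProj 0]]]) [x; y] ((pi x - y) + (y - pi x))).
  { intros. ev. reflexivity. }
  destruct (mu_total _ _ HD) as [pinv [Hpe Hp0]].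
  { intros k. destruct (Hsurj k) as [x Hx]. exists x. lia. }
  assert (Hpp : forall y, pi (pinv y) = y). { intros y. specialize (Hp0 y). lia. }
  pose (chi := fun y => beq (m64 (pinv y)) 63).
  exists (fun y => chi y = 1). split; [|split].
  - exists chi. split.
    + exists (encode (CComp cEq [CComp cM64 [CMu (CComp cAdd [CComp cSub [CComp cp [CProj 0]; CProj 1]; CComp cSub [CProj 1; CComp cp [CProj 0]]])]; kc 63])).
      intros x. eexists; split; [reflexivity|]. ev. reflexivity.
    + intros x. unfold chi, beq. destruct (Nat.eqb _ _); split; split; intros; try lia.
  - intros n. destruct (pigeon (fun i => pi (64 * i + 63))) with (n := n) as [i [_ Hi]].
    { intros a b H. apply Hinj in H. lia. }
    exists (pi (64 * i + 63)). split; auto. unfold chi.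
    assert (pinv (pi (64 * i + 63)) = 64 * i + 63) by (apply Hinj; rewrite Hpp; auto).
    rewrite H, m64_63. reflexivity.
  - intros y Hy HB. unfold chi, beq in Hy. destruct (Nat.eqb_spec (m64 (pinv y)) 63); [|discriminate].
    destruct (m64_spec (pinv y)) as [q [Hq _]]. rewrite e in Hq.
    rewrite <- (Hpp y) in HB. apply HAB in HB. apply (HA _ HB (pinv y)) in HB.
    rewrite Hq in HB. eapply W_nocode; eauto.
Qed.

Fixpoint cnt (f : nat -> nat) (y : nat) : nat := match y with 0 => 0 | S y => cnt f y + f y end.

Definition cCnt cf := CPrec CZero (CComp cAdd [CProj 1; CComp cf [CProj 0]]).
Lemma cCnt_ok : forall cf f, (forall x, eval cf [x] (f x)) -> forall y, eval (cCnt cf) [y] (cnt f y).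
Proof. intros cf f Hf. apply prec0 with (f0 := 0) (gs := fun n r => r + f n); intros; try constructor; try ev; auto. Qed.

Definition cCnt2 cf2 := CPrec CZero (CComp cAdd [CProj 1; CComp cf2 [CProj 2; CProj 0]]).
Lemma cCnt2_ok : forall cf2 f, (forall n z, eval cf2 [n; z] (f n z)) -> forall x n, eval (cCnt2 cf2) [x; n] (cnt (f n) x).
Proof. intros cf2 f Hf. apply prec1 with (f0 := fun _ => 0) (gs := fun z r n => r + f n z); intros; try constructor; try ev; auto. Qed.

Definition bit (f : nat -> nat) := forall y, f y <= 1.

Lemma cnt_le : forall f, bit f -> forall y, cnt f y <= y.
Proof. intros f Hb y; induction y; simpl; auto. specialize (Hb y); lia. Qed.

Lemma cnt_mono : forall f y y', y <= y' -> cnt f y <= cnt f y'.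
Proof. intros f y y' H; induction H; simpl; lia. Qed.

Lemma cnt_strict : forall f y y', f y = 1 -> y < y' -> cnt f y < cnt f y'.
Proof.
  intros f y y' H1 H2. assert (cnt f (S y) <= cnt f y') by (apply cnt_mono; lia). simpl in H. lia.
Qed.

Lemma cnt_inj : forall f y y', f y = 1 -> f y' = 1 -> cnt f y = cnt f y' -> y = y'.
Proof.
  intros f y y' H1 H2 H3. destruct (lt_eq_lt_dec y y') as [[H|H]|H]; auto.
  - apply (cnt_strict f) in H; auto; lia.
  - apply (cnt_strict f) in H; auto; lia.
Qed.

Definition infb (f : nat -> nat) := forall N, exists y, N <= y /\ f y = 1.

Lemma cnt_unbounded : forall f, infb f -> forall k, exists y, k <= cnt f y.
Proof.
  intros f Hi k. induction k. exists 0; lia.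
  destruct IHk as [y Hy]. destruct (Hi y) as [z [Hz1 Hz2]]. exists (S z). simpl.
  assert (cnt f y <= cnt f z) by (apply cnt_mono; auto). lia.
Qed.

Lemma exists_rank : forall f, bit f -> infb f -> forall k, exists y, f y = 1 /\ cnt f y = k.
Proof.
  intros f Hb Hi k. destruct (cnt_unbounded f Hi (S k)) as [z Hz].
  destruct (least_ex (fun z => S k <= cnt f z)) as [w [Hw Hmin]].
  { intros n. destruct (le_lt_dec (S k) (cnt f n)); [left|right]; lia. }
  { eauto. }
  destruct w as [|w]. { simpl in Hw. lia. }
  assert (~ S k <= cnt f w) by (apply Hmin; lia). simpl in Hw. specialize (Hb w).
  exists w. lia.
Qed.

Lemma cnt_compl : forall f, bit f -> forall x, cnt (fun z => 1 - f z) x = x - cnt f x.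
Proof.
  intros f Hb x. induction x; [reflexivity|]. change (cnt (fun z => 1 - f z) (S x)) with (cnt (fun z => 1 - f z) x + (1 - f x)). rewrite IHx. change (cnt f (S x)) with (cnt f x + f x). pose proof (Hb x).
  assert (cnt f x <= x) by (apply cnt_le; exact Hb). lia.
Qed.

Definition cEnumF cf := CComp cSub [kc 1; CComp cMul [CComp cf [CProj 0]; CComp cEq [CComp (cCnt cf) [CProj 0]; CProj 1]]].
Lemma cEnumF_ok : forall cf f, (forall x, eval cf [x] (f x)) ->
  forall y k, eval (cEnumF cf) [y; k] (1 - f y * beq (cnt f y) k).
Proof. intros cf f Hf y k. pose proof (cCnt_ok cf f Hf). unfold cEnumF. ev. reflexivity. Qed.

Lemma enum_ex : forall cf f, (forall x, eval cf [x] (f x)) -> bit f -> infb f ->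
  exists g, (forall k, eval (CMu (cEnumF cf)) [k] (g k)) /\ (forall k, f (g k) = 1 /\ cnt f (g k) = k).
Proof.
  intros cf f Hf Hb Hi. destruct (mu_total _ _ (cEnumF_ok cf f Hf)) as [g [Hg1 Hg2]].
  - intros k. destruct (exists_rank f Hb Hi k) as [y [H1 H2]]. exists y. rewrite H1.
    unfold beq. rewrite H2, Nat.eqb_refl. reflexivity.
  - exists g. split; auto. intros k. specialize (Hg2 k). specialize (Hb (g k)).
    unfold beq in Hg2. destruct (Nat.eqb_spec (cnt f (g k)) k); lia.
Qed.

Fixpoint par (w : nat) : nat := match w with 0 => 0 | S w => 1 - par w end.
Definition cPar := CPrec CZero (CComp cSub [kc 1; CProj 1]).
Lemma cPar_ok : forall w, eval cPar [w] (par w).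
Proof. apply prec0 with (f0 := 0) (gs := fun n r => 1 - r); intros; try constructor; try ev; auto. Qed.
#[export] Hint Resolve cPar_ok : evdb.

Lemma par_bit : forall w, par w <= 1.
Proof. induction w; cbn [par]; lia. Qed.
Lemma par_even : forall n, par (2 * n) = 0 /\ par (S (2 * n)) = 1.
Proof.
  induction n. simpl; auto.
  replace (2 * S n) with (S (S (2 * n))) by lia. destruct IHn as [H1 H2].
  cbn [par]. rewrite H1. simpl. split; reflexivity.
Qed.

Fixpoint padj (j n : nat) : nat := match j with 0 => n | S j => pair 3 (pair (padj j n) 8) end.
Definition cPadj := CPrec (CProj 0) (CComp cPair [kc 3; CComp cPair [CProj 1; kc 8]]).
Lemma cPadj_ok : forall j n, eval cPadj [j; n] (padj j n).
Proof. apply prec1 with (f0 := fun n => n) (gs := fun j r n => pair 3 (pair r 8)); intros; try ev; auto. Qed.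
#[export] Hint Resolve cPadj_ok : evdb.

Lemma padj_step : forall j n, padj j n + 2 <= padj (S j) n.
Proof.
  intros j n. simpl. assert (H := pair_S 3 (pair (padj j n) 8)). assert (H2 := pair_ge (padj j n) 8).
  simpl in H. lia.
Qed.

Lemma padj_lt : forall i j n, i < j -> padj i n + 2 <= padj j n.
Proof.
  intros i j n H. induction H. apply padj_step. pose proof (padj_step m n). lia.
Qed.

Lemma padj_ge : forall j n, j <= padj j n.
Proof. induction j; intros n; simpl. lia. pose proof (padj_step j n). simpl in H. specialize (IHj n). lia. Qed.

Fixpoint Ecnt (b n x : nat) : nat := match b with 0 => 0 | S j => Ecnt j n x + beq (padj j n) x end.
Definition cE := CPrec CZero (CComp cAdd [CProj 1; CComp cEq [CComp cPadj [CProj 0; CProj 2]; CProj 3]]).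
Lemma cE_ok : forall b n x, eval cE [b; n; x] (Ecnt b n x).
Proof. apply prec2 with (f0 := fun _ _ => 0) (gs := fun j r n x => r + beq (padj j n) x); intros; try constructor; try ev; auto. Qed.
#[export] Hint Resolve cE_ok : evdb.

Lemma Ecnt_pos : forall b n x, 1 <= Ecnt b n x <-> exists j, j < b /\ padj j n = x.
Proof.
  induction b; intros n x; simpl. split; [lia| intros [j [H _]]; lia].
  unfold beq. destruct (Nat.eqb_spec (padj b n) x).
  - split; [intros _; exists b; split; auto; lia | lia].
  - rewrite Nat.add_0_r, IHb. split; intros [j [H1 H2]]; exists j; split; auto; try lia.
    destruct (Nat.eq_dec j b); subst; [contradiction|lia].
Qed.

Definition inP (n x : nat) : nat := 1 - (1 - Ecnt (S x) n x).
Definition cInP := CComp cSub [kc 1; CComp cSub [kc 1; CComp cE [CComp CSucc [CProj 1]; CProj 0; CProj 1]]].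
Lemma cInP_ok : forall n x, eval cInP [n; x] (inP n x).
Proof. intros. unfold cInP. ev. reflexivity. Qed.
#[export] Hint Resolve cInP_ok : evdb.

Lemma inP_bit : forall n, bit (inP n).
Proof. intros n x. unfold inP. lia. Qed.

Lemma inP_spec : forall n x, inP n x = 1 <-> exists j, padj j n = x.
Proof.
  intros n x. unfold inP. assert (H := Ecnt_pos (S x) n x). split.
  - intros H1. destruct H as [H _]. destruct H as [j [_ Hj]]. lia. eauto.
  - intros [j Hj]. assert (1 <= Ecnt (S x) n x). { apply H. exists j. split; auto. pose proof (padj_ge j n). lia. } lia.
Qed.

Lemma inP_inf : forall n, infb (inP n).
Proof. intros n N. exists (padj N n). split. apply padj_ge. apply inP_spec. eauto. Qed.

Lemma notP_inf : forall n, infb (fun z => 1 - inP n z).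
Proof.
  intros n N. exists (S (padj N n)). split. pose proof (padj_ge N n); lia.
  assert (inP n (S (padj N n)) <> 1).
  { rewrite inP_spec. intros [j Hj]. destruct (lt_eq_lt_dec j N) as [[H|H]|H].
    - pose proof (padj_lt j N n H). lia.
    - subst. lia.
    - destruct (padj_lt N j n H) as [|m]; [lia|]. lia. }
  pose proof (inP_bit n (S (padj N n))). lia.
Qed.

Fixpoint kenc (u : nat) : nat := match u with 0 => pair 0 0 | S y => pair 3 (pair 1 (S (pair (kenc y) 0))) end.
Lemma encode_kc : forall u, encode (kc u) = kenc u.
Proof. induction u; simpl; [reflexivity|]. rewrite IHu. reflexivity. Qed.

Definition cK := CPrec (kc (pair 0 0)) (CComp cPair [kc 3; CComp cPair [kc 1; CComp CSucc [CComp cPair [CProj 1; kc 0]]]]).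
Lemma cK_ok : forall u, eval cK [u] (kenc u).
Proof. apply prec0 with (f0 := pair 0 0) (gs := fun n r => pair 3 (pair 1 (S (pair r 0)))); intros; try ev; auto. Qed.
#[export] Hint Resolve cK_ok : evdb.

Definition fq (u : nat) := pair 3 (pair u (S (pair (kenc u) (S (pair (pair 2 0) 0))))).
Definition cF := CComp cPair [kc 3; CComp cPair [CProj 0; CComp CSucc [CComp cPair [CComp cK [CProj 0]; kc (S (pair (pair 2 0) 0))]]]].
Lemma cF_ok : forall u, eval cF [u] (fq u).
Proof. intros. unfold cF. ev. reflexivity. Qed.
#[export] Hint Resolve cF_ok : evdb.

Lemma encode_q : forall T, encode (CComp T [kc (encode T); CProj 0]) = fq (encode T).
Proof. intros T. simpl. rewrite encode_kc. reflexivity. Qed.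

Lemma comp_inv : forall f gs v ws y, Forall2 (fun g w => eval g v w) gs ws -> (eval (CComp f gs) v y <-> eval f ws y).
Proof.
  intros f gs v ws y HF. split.
  - intros H. inversion H; subst.
    assert (ws = ws0).
    { match goal with Hx : Forall2 _ gs ws0 |- _ => rename Hx into H3 end.
      clear -HF H3. revert ws0 H3. induction HF; intros ws0 H3; inversion H3; subst; auto.
      f_equal; eauto using eval_det. }
    subst; auto.
  - intros H. econstructor; eauto.
Qed.

Fixpoint padn (j : nat) (c : code) : code := match j with 0 => c | S j => CComp (padn j c) [CProj 0] end.
Lemma encode_padn : forall j c, encode (padn j c) = padj j (encode c).
Proof. induction j; intros c; simpl; auto. Qed.
Lemma eval_padn : forall j c x y, eval (padn j c) [x] y <-> eval c [x] y.
Proof.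
  induction j; intros c x y; simpl. tauto.
  rewrite (comp_inv _ _ _ [x]). apply IHj. repeat constructor.
Qed.

Lemma dir12 : forall B : nat -> Prop, ce_set B -> (exists x, B x) ->
  (exists R : nat -> Prop, computable_set R /\ infinite_set R /\ (forall x, R x -> ~ B x)) ->
  exists pi : nat -> nat, computable_perm pi /\
    exists A : nat -> Prop, self_constructing A /\ (forall x, A x <-> B (pi x)).
Proof.
  intros B HB [b0 Hb0] [R [[chiR [HchiC HchiR]] [Rinf Rdis]]].
  destruct (code_of_ce B HB (ex_intro _ b0 Hb0)) as [cb Hcb].
  apply code_of_fun in HchiC. destruct HchiC as [cr Hcr].
  assert (bR : bit chiR). { intros y. destruct (HchiR y) as [H1 H2]. destruct (classic (R y)) as [H|H]; [apply H1 in H|apply H2 in H]; lia. }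
  assert (iR : infb chiR). { intros N. destruct (Rinf N) as [m [H1 H2]]. exists m. split; auto. apply (HchiR m); auto. }
  pose (chiR0 := fun y => chiR y * (1 - par (cnt chiR y))).
  pose (cR0 := CComp cMul [cr; CComp cSub [kc 1; CComp cPar [CComp (cCnt cr) [CProj 0]]]]).
  pose proof (cCnt_ok cr chiR Hcr) as HcntR.
  assert (HcR0 : forall y, eval cR0 [y] (chiR0 y)). { intros y. unfold cR0. ev. reflexivity. }
  pose (chiT := fun y => 1 - chiR0 y).
  pose (cT := CComp cSub [kc 1; cR0]).
  assert (HcT : forall y, eval cT [y] (chiT y)). { intros y. unfold cT. ev. reflexivity. }
  assert (bR0 : bit chiR0). { intros y. unfold chiR0. pose proof (bR y). pose proof (par_bit (cnt chiR y)). nia. }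
  assert (bT : bit chiT). { intros y. unfold chiT. lia. }
  assert (iR0 : infb chiR0).
  { intros N. destruct (exists_rank chiR bR iR (2 * N)) as [y [H1 H2]]. exists y. split.
    - pose proof (cnt_le chiR bR y). lia.
    - unfold chiR0. rewrite H1, H2. rewrite (proj1 (par_even N)). reflexivity. }
  assert (iT : infb chiT).
  { intros N. destruct (exists_rank chiR bR iR (S (2 * N))) as [y [H1 H2]]. exists y. split.
    - pose proof (cnt_le chiR bR y). lia.
    - unfold chiT, chiR0. rewrite H1, H2. rewrite (proj2 (par_even N)). reflexivity. }
  destruct (enum_ex cR0 chiR0 HcR0 bR0 iR0) as [eR0 [HeR0 PeR0]].
  destruct (enum_ex cT chiT HcT bT iT) as [eT [HeT PeT]].
  pose (piN := fun n x => inP n x * eT (cnt (inP n) x) + (1 - inP n x) * eR0 (x - cnt (inP n) x)).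
  pose (cPi := CComp cIf [cInP; CComp (CMu (cEnumF cT)) [CComp (cCnt2 cInP) [CProj 1; CProj 0]];
                 CComp (CMu (cEnumF cR0)) [CComp cSub [CProj 1; CComp (cCnt2 cInP) [CProj 1; CProj 0]]]]).
  pose proof (cCnt2_ok cInP inP cInP_ok) as HcntP.
  assert (HcPi : forall n x, eval cPi [n; x] (piN n x)). { intros n x. unfold cPi. ev. reflexivity. }
  pose (Body := CComp cb [cPi]).
  pose (T := CComp Body [CComp cF [CProj 0]; CProj 1]).
  pose (c := CComp T [kc (encode T); CProj 0]).
  pose (n0 := encode c).
  assert (Hn0 : n0 = fq (encode T)) by apply encode_q.
  assert (Hc : forall x y, eval c [x] y <-> eval cb [piN n0 x] y).
  { intros x y. unfold c. rewrite (comp_inv _ _ _ [encode T; x]) by (repeat (apply Forall2_cons; [ev_free|]); apply Forall2_nil).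
    unfold T. rewrite (comp_inv _ _ _ [fq (encode T); x]) by (repeat (apply Forall2_cons; [ev_free|]); apply Forall2_nil).
    unfold Body. rewrite (comp_inv _ _ _ [piN (fq (encode T)) x]) by (repeat (apply Forall2_cons; [ev_free|]); apply Forall2_nil).
    rewrite Hn0. tauto. }
  pose (pi := piN n0).
  pose (p := inP n0).
  assert (bp : bit p) by apply inP_bit.
  assert (Hq := cnt_compl p bp).
  assert (Hpi1 : forall x, p x = 1 -> pi x = eT (cnt p x)).
  { intros x H. unfold pi, piN. fold p. rewrite H. lia. }
  assert (Hpi0 : forall x, p x = 0 -> pi x = eR0 (x - cnt p x)).
  { intros x H. unfold pi, piN. fold p. rewrite H. lia. }
  assert (Hp01 : forall x, p x = 0 \/ p x = 1) by (intros x; pose proof (bp x); lia).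
  assert (HpiR : forall x, p x = 0 -> R (pi x)).
  { intros x H. rewrite Hpi0 by auto. destruct (PeR0 (x - cnt p x)) as [H1 _].
    apply (HchiR _). unfold chiR0 in H1. pose proof (bR (eR0 (x - cnt p x))). nia. }
  assert (Hinj : forall x y, pi x = pi y -> x = y).
  { intros x y Hxy.
    destruct (Hp01 x) as [Hx|Hx]; destruct (Hp01 y) as [Hy|Hy].
    - rewrite !Hpi0 in Hxy by auto.
      assert (x - cnt p x = y - cnt p y).
      { rewrite <- (proj2 (PeR0 (x - cnt p x))), <- (proj2 (PeR0 (y - cnt p y))), Hxy. reflexivity. }
      rewrite <- !Hq in H. apply (cnt_inj (fun z => 1 - p z)); auto; lia.
    - exfalso. rewrite Hpi0 in Hxy by auto. rewrite Hpi1 in Hxy by auto.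
      destruct (PeR0 (x - cnt p x)) as [H1 _]. destruct (PeT (cnt p y)) as [H2 _].
      unfold chiT in H2. rewrite Hxy in H1. lia.
    - exfalso. rewrite Hpi1 in Hxy by auto. rewrite Hpi0 in Hxy by auto.
      destruct (PeR0 (y - cnt p y)) as [H1 _]. destruct (PeT (cnt p x)) as [H2 _].
      unfold chiT in H2. rewrite Hxy in H2. lia.
    - rewrite !Hpi1 in Hxy by auto.
      assert (cnt p x = cnt p y).
      { rewrite <- (proj2 (PeT (cnt p x))), <- (proj2 (PeT (cnt p y))), Hxy. reflexivity. }
      apply (cnt_inj p); auto. }
  assert (Hsurj : forall y, exists x, pi x = y).
  { intros y. destruct (Nat.eq_dec (chiR0 y) 1) as [Hy|Hy].
    - destruct (exists_rank (fun z => 1 - p z) ltac:(intros z; lia) (notP_inf n0) (cnt chiR0 y)) as [x [H1 H2]].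
      exists x. rewrite Hpi0 by lia. rewrite <- Hq, H2.
      destruct (PeR0 (cnt chiR0 y)) as [H3 H4]. apply (cnt_inj chiR0); auto.
    - assert (HTy : chiT y = 1) by (unfold chiT; pose proof (bR0 y); lia).
      destruct (exists_rank p bp (inP_inf n0) (cnt chiT y)) as [x [H1 H2]].
      exists x. rewrite Hpi1 by auto. rewrite H2.
      destruct (PeT (cnt chiT y)) as [H3 H4]. apply (cnt_inj chiT); auto. }
  exists pi. split.
  { split. split; auto. exists (encode (CComp cPi [kc n0; CProj 0])). intros x. eexists; split; [reflexivity|].
    ev. reflexivity. }
  exists (fun x => B (pi x)). split; [|tauto].
  assert (HA : forall x, B (pi x) <-> W n0 x).
  { intros x. unfold n0. rewrite W_code, Hcb. split; intros [y Hy]; exists y; apply Hc; auto. }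
  split; [|split].
  - exists n0. exact HA.
  - destruct (Hsurj b0) as [x Hx]. exists x. rewrite Hx. auto.
  - intros e He x. assert (Hpe : p e = 1).
    { destruct (Hp01 e) as [H|H]; auto. exfalso. apply (Rdis _ (HpiR e H)). auto. }
    apply inP_spec in Hpe. destruct Hpe as [j Hj]. subst e.
    rewrite HA. unfold n0. rewrite <- encode_padn, !W_code.
    split; intros [y Hy]; exists y; apply eval_padn in Hy || apply eval_padn; auto.
Qed.

Theorem theorem4 :
  forall B : nat -> Prop,
    ce_set B -> (exists x, B x) ->
    ((exists R : nat -> Prop,
        computable_set R /\ infinite_set R /\ (forall x, R x -> ~ B x))
     <->
     (exists pi : nat -> nat, computable_perm pi /\
        exists A : nat -> Prop, self_constructing A /\
          (* pi(A) = B, i.e. A = pi^{-1}(B) *)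
          (forall x, A x <-> B (pi x)))).
Proof.
  intros B HB Hne. split.
  - apply dir12; auto.
  - apply dir21.
Qed.
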